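(* Let $G$ be a connected, locally finite Cayley graph of a group $\Gamma$, and let $r\in\mathbb{N}$. Then the $r$-local cover $G_r$ of $G$ is (isomorphic to) a connected, locally finite Cayley graph of a finitely presented group $\Gamma_r$ of which $\Gamma$ is a quotient.
   Context: $\mathrm{Cay}(\Gamma,S)$ (for $S\subseteq\Gamma$) has vertex set $\Gamma$, edge set $\{(g,s):g\in\Gamma,s\in S\}$, edge $(g,s)$ joining $g$ and $gs$; graphs may have loops and parallel edges and are viewed as 1-complexes. A cycle may be a loop or a pair of parallel edges; a closed walk once around a cycle $O$ traverses every edge of $O$ exactly once. For a connected graph $G$ and vertex $x_0$, $\pi_1^r(G,x_0)$ is the subgroup of $\pi_1(G,x_0)$ generated by the classes of closed walks $W_0QW_0^-$ with $W_0$ a walk from $x_0$ to a vertex $y$, $Q$ a closed walk at $y$ once around a cycle of length at most $r$, $W_0^-$ the reverse of $W_0$. The $r$-local covering $p_r:G_r\to G$ is the connected normal covering with characteristic subgroup $\pi_1^r(G,x_0)$, and $G_r$ is the $r$-local cover. *)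

(* Defs.v *)
From Stdlib Require Import Relations.
From Stdlib Require List.
From mathcomp Require Import ssreflect ssrfun ssrbool eqtype ssrnat seq choice fintype.

Set Implicit Arguments.
Unset Strict Implicit.
Unset Printing Implicit Defensive.

Record grp := Grp {
  gcar :> Type;
  gmul : gcar -> gcar -> gcar;
  gone : gcar;
  ginv : gcar -> gcar;
  gmulA : forall x y z, gmul x (gmul y z) = gmul (gmul x y) z;
  gmul1 : forall x, gmul gone x = x;
  gmulV : forall x, gmul (ginv x) x = gone }.

Arguments gmul {g}.
Arguments ginv {g}.

Definition grp_hom (G H : grp) (f : G -> H) : Prop :=
  forall x y, f (gmul x y) = gmul (f x) (f y).

Definition is_quotient_of (Gam Gr : grp) : Prop :=
  exists f : Gr -> Gam, grp_hom f /\ (forall y : Gam, exists x : Gr, f x = y).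

(* (x, true) stands for the generator x, (x, false) for its inverse.    *)
Fixpoint weval (H : grp) (X : Type) (gam : X -> H) (w : seq (X * bool)) : H :=
  match w with
  | [::] => gone H
  | (x, b) :: w' => gmul (if b then gam x else ginv (gam x)) (weval gam w')
  end.

(* elementary moves: free cancellation and deletion of a relator;       *)
(* their equivalence closure relates w to [::] iff w lies in the normal *)
(* closure of R in the free group on X.                                 *)
Inductive pstep (X : Type) (R : seq (seq (X * bool))) :
    seq (X * bool) -> seq (X * bool) -> Prop :=
  | PS_free u v x b : pstep R (u ++ (x, b) :: (x, ~~ b) :: v) (u ++ v)
  | PS_rel u v rr : List.In rr R -> pstep R (u ++ rr ++ v) (u ++ v).

Definition pres_eq (X : Type) (R : seq (seq (X * bool))) :=
  clos_refl_sym_trans _ (pstep R).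

Definition finitely_presented (H : grp) : Prop :=
  exists (X : finType) (gam : X -> H) (R : seq (seq (X * bool))),
    (forall h : H, exists w, weval gam w = h) /\
    (forall w, weval gam w = gone H <-> pres_eq R w [::]).

(* Multigraphs (loops and parallel edges allowed); every edge carries   *)
(* a reference orientation tl -> hd, but is an undirected 1-cell.       *)
Record mgraph := MGraph {
  vtx : Type;
  edg : Type;
  tl : edg -> vtx;
  hd : edg -> vtx }.

Arguments tl {m}.
Arguments hd {m}.

Definition Cay (Gam : grp) (S : Gam -> Prop) : mgraph :=
  @MGraph Gam (Gam * {s : Gam | S s})%type (fun e => e.1)
          (fun e => gmul e.1 (sval e.2)).

Definition dart (G : mgraph) := (edg G * bool)%type.
Definition dsrc (G : mgraph) (d : dart G) : vtx G := if d.2 then tl d.1 else hd d.1.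
Definition dtgt (G : mgraph) (d : dart G) : vtx G := if d.2 then hd d.1 else tl d.1.
Definition dflip (G : mgraph) (d : dart G) : dart G := (d.1, ~~ d.2).

Fixpoint is_walk (G : mgraph) (x : vtx G) (w : seq (dart G)) (y : vtx G) : Prop :=
  match w with
  | [::] => x = y
  | d :: w' => dsrc d = x /\ is_walk (dtgt d) w' y
  end.

Definition rev_walk (G : mgraph) (w : seq (dart G)) : seq (dart G) :=
  rev (map (@dflip G) w).

Definition connected (G : mgraph) : Prop :=
  forall x y : vtx G, exists w, is_walk x w y.

Definition locally_finite (G : mgraph) : Prop :=
  forall x : vtx G, exists l : seq (edg G),
    forall e, (tl e = x \/ hd e = x) -> List.In e l.

Definition mg_iso (G H : mgraph) : Prop :=
  exists (fv : vtx G -> vtx H) (fe : edg G -> edg H),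
    bijective fv /\ bijective fe /\
    forall e, tl (fe e) = fv (tl e) /\ hd (fe e) = fv (hd e).

Inductive hstep (G : mgraph) : seq (dart G) -> seq (dart G) -> Prop :=
  | HStep u v (d : dart G) : hstep (u ++ d :: dflip d :: v) (u ++ v).

Definition homotopic (G : mgraph) := clos_refl_sym_trans _ (@hstep G).

(* Q is a closed walk at y once around a cycle of length at most r:     *)
(* a closed walk of length k, 1 <= k <= r, with pairwise distinct edges  *)
(* and pairwise distinct visited vertices (k = 1: a loop, k = 2: a pair  *)
(* of parallel edges).                                                   *)
Definition once_around (G : mgraph) (y : vtx G) (Q : seq (dart G)) (r : nat) : Prop :=
  is_walk y Q y /\ 0 < size Q <= r /\
  List.NoDup (map (fun d : dart G => d.1) Q) /\ List.NoDup (map (@dsrc G) Q).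

(* pi1r_mem G r x0 W : the homotopy class of the closed walk W at x0     *)
(* lies in pi_1^r(G, x0), the subgroup generated by the classes of the  *)
(* lassos W0 Q W0^-.                                                     *)
Inductive pi1r_mem (G : mgraph) (r : nat) (x0 : vtx G) : seq (dart G) -> Prop :=
  | P_lasso W0 y Q : is_walk x0 W0 y -> once_around y Q r ->
                     pi1r_mem r x0 (W0 ++ Q ++ rev_walk W0)
  | P_nil : pi1r_mem r x0 [::]
  | P_cat a b : pi1r_mem r x0 a -> pi1r_mem r x0 b -> pi1r_mem r x0 (a ++ b)
  | P_inv a : pi1r_mem r x0 a -> pi1r_mem r x0 (rev_walk a)
  | P_hom a b : pi1r_mem r x0 a -> homotopic a b -> pi1r_mem r x0 b.

(* The r-local cover G_r: the covering with characteristic subgroup     *)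
(* pi_1^r(G,x0), realised by the standard construction: vertices are    *)
(* classes of walks from x0, W ~ W' iff same end and W W'^- in pi_1^r;   *)
(* the lift of the edge e at the class [W] (W ending at tl e) joins [W]  *)
(* and [W e].                                                            *)
Definition rclass (G : mgraph) (r : nat) (x0 y : vtx G) (W : seq (dart G)) :
  seq (dart G) -> Prop :=
  fun W' => is_walk x0 W' y /\ pi1r_mem r x0 (W ++ rev_walk W').

Definition lc_vtx (G : mgraph) (r : nat) (x0 : vtx G) :=
  {C : seq (dart G) -> Prop | exists y W, is_walk x0 W y /\ C = rclass r x0 y W}.

Definition lc_edg (G : mgraph) (r : nat) (x0 : vtx G) :=
  {t : ((seq (dart G) -> Prop) * edg G * (seq (dart G) -> Prop))%type |
     exists W, is_walk x0 W (tl t.1.2) /\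
               t.1.1 = rclass r x0 (tl t.1.2) W /\
               t.2 = rclass r x0 (hd t.1.2) (W ++ [:: (t.1.2, true)])}.

Lemma is_walk_rcons (G : mgraph) (x y : vtx G) (w : seq (dart G)) (d : dart G) :
  is_walk x w y -> dsrc d = y -> is_walk x (w ++ [:: d]) (dtgt d).
Proof.
elim: w x => [|d' w IH] x /=; first by move=> -> ->.
by case=> -> Hw Hd; split=> //; apply: IH.
Qed.

Lemma lc_tl_ok (G : mgraph) (r : nat) (x0 : vtx G) (t : lc_edg r x0) :
  exists y W, is_walk x0 W y /\ (sval t).1.1 = rclass r x0 y W.
Proof. case: t => [t [W [HW [H1 _]]]] /=; by exists (tl t.1.2), W. Qed.

Lemma lc_hd_ok (G : mgraph) (r : nat) (x0 : vtx G) (t : lc_edg r x0) :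
  exists y W, is_walk x0 W y /\ (sval t).2 = rclass r x0 y W.
Proof.
case: t => [t [W [HW [_ H2]]]] /=.
exists (hd t.1.2), (W ++ [:: (t.1.2, true)]); split=> //.
exact: (@is_walk_rcons G x0 (tl t.1.2) W (t.1.2, true) HW).
Qed.

Definition lc_tl (G : mgraph) (r : nat) (x0 : vtx G) (t : lc_edg r x0) : lc_vtx r x0 :=
  exist _ (sval t).1.1 (lc_tl_ok t).
Definition lc_hd (G : mgraph) (r : nat) (x0 : vtx G) (t : lc_edg r x0) : lc_vtx r x0 :=
  exist _ (sval t).2 (lc_hd_ok t).

Definition local_cover (G : mgraph) (r : nat) (x0 : vtx G) : mgraph :=
  @MGraph (lc_vtx r x0) (lc_edg r x0) (@lc_tl G r x0) (@lc_hd G r x0).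

(* Main.v *)
Require Import Defs.
From Stdlib Require Import Relations.
From Stdlib Require List.
From Stdlib Require Import ClassicalEpsilon ProofIrrelevance FunctionalExtensionality PropExtensionality.
From mathcomp Require Import ssreflect ssrfun ssrbool eqtype ssrnat seq choice fintype tuple.

Set Implicit Arguments.
Unset Strict Implicit.
Unset Printing Implicit Defensive.

Section GrpLemmas.
Variable G : grp.
Local Notation "x * y" := (gmul x y).
Local Notation one := (gone G).

Lemma gmulVr (x : G) : x * ginv x = one.
Proof.
have H1 := gmulV (ginv x).
rewrite -[x * ginv x]gmul1 -{1}H1 -gmulA [ginv x * (x * ginv x)]gmulA gmulV gmul1.
exact: H1.
Qed.

Lemma gmulr1 (x : G) : x * one = x.
Proof. by rewrite -(gmulV x) gmulA gmulVr gmul1. Qed.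

Lemma gmulKl (a x : G) : ginv a * (a * x) = x.
Proof. by rewrite gmulA gmulV gmul1. Qed.

Lemma gmulKr (a x : G) : a * (ginv a * x) = x.
Proof. by rewrite gmulA gmulVr gmul1. Qed.

Lemma gmul_cancl (a x y : G) : a * x = a * y -> x = y.
Proof. by move=> H; rewrite -(gmulKl a x) H gmulKl. Qed.

Lemma ginv_uniq (x y : G) : y * x = one -> y = ginv x.
Proof. by move=> H; rewrite -(gmulr1 y) -(gmulVr x) gmulA H gmul1. Qed.

Lemma ginvK (x : G) : ginv (ginv x) = x.
Proof. by symmetry; apply: ginv_uniq; apply: gmulVr. Qed.

Lemma ginvM (x y : G) : ginv (x * y) = ginv y * ginv x.
Proof.
symmetry; apply: ginv_uniq.
by rewrite -gmulA [ginv x * (x * y)]gmulA gmulV gmul1 gmulV.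
Qed.

Lemma ginv1 : ginv one = one.
Proof. by symmetry; apply: ginv_uniq; rewrite gmul1. Qed.

Lemma mul_eq1 (x y : G) : x * ginv y = one -> x = y.
Proof. by move=> H; rewrite -(ginvK y); apply: ginv_uniq. Qed.

Lemma right_id_uniq (y e : G) : y * e = y -> e = one.
Proof. by move=> H; apply: (@gmul_cancl y); rewrite gmulr1. Qed.
End GrpLemmas.
Section Homotopy.
Variable H : mgraph.
Implicit Types a b c u v W : seq (dart H).

Lemma dflipK (d : dart H) : dflip (dflip d) = d.
Proof. by case: d => e b; rewrite /dflip /= negbK. Qed.

Lemma rev_walk_cat a b : rev_walk (a ++ b) = rev_walk b ++ rev_walk a.
Proof. by rewrite /rev_walk map_cat rev_cat. Qed.

Lemma rev_walkK a : rev_walk (rev_walk a) = a.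
Proof.
rewrite /rev_walk map_rev revK -map_comp.
by elim: a => //= d a ->; rewrite dflipK.
Qed.

Lemma rev_walk_cons d a : rev_walk (d :: a) = rev_walk a ++ [:: dflip d].
Proof. by rewrite /rev_walk /= rev_cons -cats1. Qed.

Lemma homotopic_cat u v a b : homotopic a b -> homotopic (u ++ a ++ v) (u ++ b ++ v).
Proof.
elim=> [x y [u' v' d]| x | x y _ IH | x y z _ IH1 _ IH2].
- apply: rst_step.
  have -> : u ++ (u' ++ [:: d, dflip d & v']) ++ v = (u ++ u') ++ d :: dflip d :: (v' ++ v).
    by rewrite -!catA.
  have -> : u ++ (u' ++ v') ++ v = (u ++ u') ++ (v' ++ v) by rewrite -!catA.
  exact: HStep.
- exact: rst_refl.
- exact: rst_sym.
- exact: rst_trans IH2.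
Qed.

Lemma homotopic_cancel W : homotopic (W ++ rev_walk W) [::].
Proof.
elim: W => [|d W IH]; first exact: rst_refl.
rewrite rev_walk_cons /=.
apply: (@rst_trans _ _ _ (d :: dflip d :: [::])).
  have := homotopic_cat [:: d] [:: dflip d] IH.
  by rewrite /= -catA.
apply: rst_step; exact: (HStep [::] [::] d).
Qed.

Lemma homotopic_cancel' W : homotopic (rev_walk W ++ W) [::].
Proof. by have := homotopic_cancel (rev_walk W); rewrite rev_walkK. Qed.

Lemma homotopic_del u v W : homotopic (u ++ (W ++ rev_walk W) ++ v) (u ++ v).
Proof. by have := homotopic_cat u v (homotopic_cancel W). Qed.

Lemma is_walk_cat x y z a b :
  @is_walk H x a y -> is_walk y b z -> is_walk x (a ++ b) z.
Proof.
elim: a x => [|d a IH] x /=; first by move=> ->.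
by case=> -> Ha Hb; split=> //; apply: IH Hb.
Qed.

Variable r : nat.

Lemma pi_refl x0 W : pi1r_mem r x0 (W ++ rev_walk W).
Proof. apply: (P_hom (P_nil r x0)); apply: rst_sym; exact: homotopic_cancel. Qed.

Lemma pi_WH x0 a b X :
  pi1r_mem r x0 (a ++ rev_walk b) -> pi1r_mem r x0 (b ++ X) -> pi1r_mem r x0 (a ++ X).
Proof.
move=> H1 H2; apply: (P_hom (P_cat H1 H2)).
have := homotopic_del a X (rev_walk b); rewrite rev_walkK.
by rewrite -!catA.
Qed.

Lemma pi_sym x0 a b : pi1r_mem r x0 (a ++ rev_walk b) -> pi1r_mem r x0 (b ++ rev_walk a).
Proof. by move/P_inv; rewrite rev_walk_cat rev_walkK. Qed.

Lemma pi_conj x0 g W c : is_walk x0 W g -> pi1r_mem r g c ->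
  pi1r_mem r x0 (W ++ c ++ rev_walk W).
Proof.
move=> HW; elim=> {c} [W0 y Q HW0 HQ | | a b _ IHa _ IHb | a _ IH | a b _ IH Hab].
- have -> : W ++ (W0 ++ Q ++ rev_walk W0) ++ rev_walk W = (W ++ W0) ++ Q ++ rev_walk (W ++ W0).
    by rewrite rev_walk_cat -!catA.
  apply: P_lasso (HQ); exact: is_walk_cat HW HW0.
- exact: pi_refl.
- apply: (P_hom (P_cat IHa IHb)).
  have := homotopic_del (W ++ a) (b ++ rev_walk W) (rev_walk W); rewrite rev_walkK.
  by rewrite -!catA.
- move/P_inv: IH; by rewrite !rev_walk_cat rev_walkK catA.
- apply: (P_hom IH); exact: homotopic_cat.
Qed.
End Homotopy.
Section Cayley.
Variable Gam : grp.
Variable S : Gam -> Prop.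
Variable r : nat.
Local Notation "x * y" := (gmul x y).
Local Notation one := (gone Gam).
Local Notation A := {s : Gam | S s}.
Local Notation G := (Cay S).
Local Notation D := (dart G).

Definition lv (p : A * bool) : Gam := if p.2 then sval p.1 else ginv (sval p.1).

Fixpoint ev (w : seq (A * bool)) : Gam :=
  if w is p :: w' then lv p * ev w' else one.

Definition stepd (g : Gam) (p : A * bool) : D :=
  if p.2 then ((g, p.1), true) else ((g * ginv (sval p.1), p.1), false).

Fixpoint walkf (g : Gam) (w : seq (A * bool)) : seq D :=
  if w is p :: w' then stepd g p :: walkf (g * lv p) w' else [::].

Definition wordA (c : seq D) : seq (A * bool) := map (fun d : D => (d.1.2, d.2)) c.

Definition tr (h : Gam) (d : D) : D := ((h * d.1.1, d.1.2), d.2).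

Definition invw (T : Type) (w : seq (T * bool)) : seq (T * bool) :=
  rev (map (fun p => (p.1, ~~ p.2)) w).

Lemma ev_cat a b : ev (a ++ b) = ev a * ev b.
Proof. by elim: a => [|p a IH] /=; rewrite ?gmul1 // IH gmulA. Qed.

Lemma rev_cons' (T : Type) (x : T) s : rev (x :: s) = rev s ++ [:: x].
Proof. by rewrite rev_cons -cats1. Qed.

Lemma ev_invw a : ev (invw a) = ginv (ev a).
Proof.
elim: a => [|[s b] a IH] /=; first by rewrite /invw /= ginv1.
rewrite /invw /= rev_cons' -/(invw a) ev_cat IH ginvM /= gmulr1.
by case: b; rewrite /lv /= ?ginvK.
Qed.

Lemma walkf_cat g a b : walkf g (a ++ b) = walkf g a ++ walkf (g * ev a) b.
Proof.
elim: a g => [|p a IH] g /=; first by rewrite gmulr1.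
by rewrite IH gmulA.
Qed.

Lemma walkf_walk (g : Gam) w : @is_walk G g (walkf g w) (g * ev w).
Proof.
elim: w g => [|[s b] w IH] g /=; first by rewrite gmulr1.
case: b; rewrite /stepd /dsrc /dtgt /lv /=; split.
- by [].
- by rewrite gmulA; apply: IH.
- by rewrite -gmulA gmulV gmulr1.
- by rewrite gmulA; apply: IH.
Qed.

Lemma wordA_walkf g w : wordA (walkf g w) = w.
Proof. by elim: w g => [|[s [|]] w IH] g //=; rewrite IH. Qed.

Lemma walkf_wordA (g : Gam) c (y : Gam) : @is_walk G g c y -> walkf g (wordA c) = c.
Proof.
elim: c g => [|[[h s] b] c IH] g //=.
case; case: b; rewrite /dsrc /= => Hs Hw; rewrite /stepd /lv /=.
- by subst h; rewrite (IH _ Hw).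
- by rewrite -Hs -gmulA gmulVr gmulr1 (IH _ Hw).
Qed.

Lemma walk_uniq (H : mgraph) (g : vtx H) c (y y' : vtx H) :
  is_walk g c y -> is_walk g c y' -> y = y'.
Proof.
elim: c g => [|d c IH] g /=; first by move=> <- <-.
by case=> _ H1 [_ H2]; apply: IH H1 H2.
Qed.

Lemma walk_ev (g : Gam) c (y : Gam) : @is_walk G g c y -> g * ev (wordA c) = y.
Proof.
move=> H; have := walkf_walk g (wordA c).
rewrite (walkf_wordA H) => H'; exact: walk_uniq H' H.
Qed.
Lemma wordA_cat a b : wordA (a ++ b) = wordA a ++ wordA b.
Proof. by rewrite /wordA map_cat. Qed.

Lemma wordA_rev a : wordA (rev_walk a) = invw (wordA a).
Proof. by rewrite /wordA /invw /rev_walk !map_rev -!map_comp. Qed.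

Definition evd (c : seq D) := ev (wordA c).

Lemma lv_cancel (s : A) b : lv (s, b) * lv (s, ~~ b) = one.
Proof. by case: b; rewrite /lv /= ?gmulVr ?gmulV. Qed.

Lemma evd_hom a b : homotopic a b -> evd a = evd b.
Proof.
elim=> [x y [u v d]| x | x y _ IH | x y z _ IH1 _ IH2] //; last by rewrite IH1.
rewrite /evd !wordA_cat !ev_cat /=.
case: d => [e bb]; rewrite /dflip /=.
by rewrite [lv _ * (_ * _)]gmulA lv_cancel gmul1.
Qed.


Lemma evd_pi_gen (x0 : Gam) c : pi1r_mem r (x0 : vtx G) c -> evd c = one.
Proof.
elim=> {c} [W0 y Q HW0 HQ | | a b _ IHa _ IHb | a _ IH | a b _ IH Hab].
- rewrite /evd !wordA_cat wordA_rev !ev_cat ev_invw.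
  case: HQ => HQ _.
  have /right_id_uniq -> := walk_ev HQ.
  by rewrite gmul1 gmulVr.
- by [].
- by rewrite /evd wordA_cat ev_cat -/(evd a) -/(evd b) IHa IHb gmul1.
- by rewrite /evd wordA_rev ev_invw -/(evd a) IH ginv1.
- by rewrite -(evd_hom Hab).
Qed.

Lemma tr_walk h (x : Gam) c (y : Gam) : @is_walk G x c y ->
  @is_walk G (h * x) (map (tr h) c) (h * y).
Proof.
elim: c x => [|[[g s] b] c IH] x /=; first by move=> ->.
case: b; rewrite /dsrc /dtgt /tr /= => -[<- Hw]; split=> //.
- by rewrite -gmulA; apply: IH.
- by rewrite gmulA.
- exact: IH.
Qed.

Lemma tr_rev h c : map (tr h) (rev_walk c) = rev_walk (map (tr h) c).
Proof. by rewrite /rev_walk map_rev -!map_comp. Qed.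

Lemma NoDup_map_inj (T U : Type) (f : T -> U) (l : seq T) :
  (forall x y, f x = f y -> x = y) -> List.NoDup l -> List.NoDup (map f l).
Proof.
move=> Hf; elim=> [|x l' Hx Hl IH] /=; first exact: List.NoDup_nil.
apply: List.NoDup_cons => // Hin; apply: Hx.
elim: l' Hin {Hl IH} => //= z l' IHl [/Hf ->|]; [by left | by right; auto].
Qed.

Lemma tr_once h (y : Gam) Q : once_around (y : vtx G) Q r ->
  once_around ((h * y) : vtx G) (map (tr h) Q) r.
Proof.
case=> HQ [Hs [Hn1 Hn2]]; split; first exact: tr_walk.
split; first by rewrite size_map.
split.
- have -> : map (fun d : D => d.1) (map (tr h) Q) =
            map (fun e : Gam * A => (h * e.1, e.2)) (map (fun d : D => d.1) Q).
    by rewrite -!map_comp.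
  apply: NoDup_map_inj Hn1 => [[x1 x2] [y1 y2]] /= [/gmul_cancl -> ->].
  by [].
- have -> : map (@dsrc G) (map (tr h) Q) = map (fun g : Gam => h * g) (map (@dsrc G) Q).
    rewrite -!map_comp; apply: eq_map => -[[g s] [|]] //=.
    by rewrite /dsrc /= gmulA.
  apply: NoDup_map_inj Hn2 => x1 y1; exact: gmul_cancl.
Qed.

Lemma tr_hom h a b : homotopic a b -> homotopic (map (tr h) a) (map (tr h) b).
Proof.
elim=> [x y [u v d]| x | x y _ IH | x y z _ IH1 _ IH2].
- rewrite !map_cat /=; apply: rst_step.
  by case: d => e bb; exact: HStep.
- exact: rst_refl.
- exact: rst_sym.
- exact: rst_trans IH2.
Qed.

Lemma tr_pi h (x0 : Gam) c : pi1r_mem r (x0 : vtx G) c ->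
  pi1r_mem r ((h * x0) : vtx G) (map (tr h) c).
Proof.
elim=> {c} [W0 y Q HW0 HQ | | a b _ IHa _ IHb | a _ IH | a b _ IH Hab].
- rewrite !map_cat tr_rev; apply: P_lasso; [exact: tr_walk HW0 | exact: tr_once].
- exact: P_nil.
- rewrite map_cat; exact: P_cat.
- rewrite tr_rev; exact: P_inv.
- exact: P_hom IH (tr_hom h Hab).
Qed.

Lemma walkf_tr h g w : walkf (h * g) w = map (tr h) (walkf g w).
Proof.
elim: w g => [|[s b] w IH] g //=.
rewrite -gmulA IH; congr (_ :: _).
by case: b; rewrite /stepd /tr /= ?gmulA.
Qed.

Definition rel (a b : seq (A * bool)) : Prop :=
  pi1r_mem r (one : vtx G) (walkf one a ++ rev_walk (walkf one b)).

Lemma rel_refl a : rel a a.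
Proof. exact: pi_refl. Qed.

Lemma rel_sym a b : rel a b -> rel b a.
Proof. exact: pi_sym. Qed.

Lemma rel_trans a b c : rel a b -> rel b c -> rel a c.
Proof. move=> H1 H2; apply: pi_WH (H2); exact: H1. Qed.

Lemma rel_ev a b : rel a b -> ev a = ev b.
Proof.
move/evd_pi_gen; rewrite /evd wordA_cat wordA_rev !wordA_walkf ev_cat ev_invw.
exact: mul_eq1.
Qed.

Lemma rel_hom a b : homotopic (walkf one a) (walkf one b) -> rel a b.
Proof.
move=> H; apply: (P_hom (@pi_refl G r (one : vtx G) (walkf one b))).
have := homotopic_cat [::] (rev_walk (walkf one b)) (rst_sym _ _ _ _ H).
by rewrite /=.
Qed.

Lemma rel_catr a a' b : rel a a' -> rel (a ++ b) (a' ++ b).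
Proof.
move=> H; have He := rel_ev H.
rewrite /rel !walkf_cat He rev_walk_cat.
apply: (P_hom H); apply: rst_sym.
have := homotopic_del (walkf one a) (rev_walk (walkf one a')) (walkf (one * ev a') b).
by rewrite -!catA.
Qed.

Lemma rel_catl a a' b : rel a a' -> rel (b ++ a) (b ++ a').
Proof.
move=> H; rewrite /rel !walkf_cat.
set g := one * ev b.
have Ht : forall w, walkf g w = map (tr g) (walkf one w).
  by move=> w; rewrite -walkf_tr gmulr1.
rewrite !Ht rev_walk_cat.
have -> : (walkf one b ++ [seq tr g i | i <- walkf one a]) ++
    rev_walk [seq tr g i | i <- walkf one a'] ++ rev_walk (walkf one b) =
    walkf one b ++ map (tr g) (walkf one a ++ rev_walk (walkf one a')) ++ rev_walk (walkf one b).
  by rewrite map_cat tr_rev -!catA.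
apply: pi_conj; first exact: walkf_walk.
have := tr_pi g H; by rewrite gmulr1.
Qed.

Lemma rel_free u v (s : A) bb : rel (u ++ (s, bb) :: (s, ~~ bb) :: v) (u ++ v).
Proof.
apply: rel_hom; rewrite !walkf_cat /=.
set g := one * ev u.
have [E1 E2] : stepd (g * lv (s, bb)) (s, ~~ bb) = dflip (stepd g (s, bb)) /\
               g * lv (s, bb) * lv (s, ~~ bb) = g.
  by case: bb; rewrite /stepd /lv /dflip /= ?gmulKr -?gmulA ?gmulVr ?gmulV ?gmulr1.
rewrite E1 E2; apply: rst_step; exact: HStep.
Qed.

Lemma rel_invw a : rel (invw a ++ a) [::].
Proof.
elim: a => [|[s bb] a IH]; first exact: rel_refl.
rewrite /invw /= rev_cons' -/(invw a) -catA /=.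
apply: rel_trans IH.
have := rel_free (invw a) a s (~~ bb); by rewrite negbK.
Qed.

Definition cls (a : seq (A * bool)) : seq (A * bool) -> Prop := rel a.

Lemma cls_eq a b : cls a = cls b <-> rel a b.
Proof.
split=> [H | H].
  have : cls b b by exact: rel_refl.
  by rewrite -H.
apply: functional_extensionality => w; apply: propositional_extensionality.
split=> H'; [apply: rel_trans H' | apply: rel_trans H'] => //.
exact: rel_sym.
Qed.

Definition Tc := {P : seq (A * bool) -> Prop | exists a, P = cls a}.

Lemma sig_eq (X : Type) (P : X -> Prop) (x y : sig P) : sval x = sval y -> x = y.
Proof.
case: x => x px; case: y => y py /= E; subst y.
by rewrite (proof_irrelevance _ px py).
Qed.

Definition mkc (a : seq (A * bool)) : Tc := exist _ (cls a) (ex_intro _ a erefl).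

Lemma mkc_eq a b : mkc a = mkc b <-> rel a b.
Proof.
split=> [H | H].
  by apply/cls_eq; have := f_equal sval H.
by apply: sig_eq => /=; apply/cls_eq.
Qed.

Definition rep (x : Tc) : seq (A * bool) :=
  proj1_sig (constructive_indefinite_description _ (proj2_sig x)).

Lemma mkc_rep x : mkc (rep x) = x.
Proof.
apply: sig_eq; rewrite /rep /=.
by case: (constructive_indefinite_description _ _) => a /= ->.
Qed.

Lemma mkc_surj (x : Tc) : exists a, x = mkc a.
Proof. by exists (rep x); rewrite mkc_rep. Qed.

Lemma rel_rep a : rel (rep (mkc a)) a.
Proof. by apply/mkc_eq; rewrite mkc_rep. Qed.

Definition Tmul (x y : Tc) : Tc := mkc (rep x ++ rep y).
Definition Tone : Tc := mkc [::].
Definition Tinv (x : Tc) : Tc := mkc (invw (rep x)).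

Lemma mul_mkc a b : Tmul (mkc a) (mkc b) = mkc (a ++ b).
Proof.
apply/mkc_eq; apply: rel_trans (rel_catr _ (rel_rep a)).
exact: rel_catl (rel_rep b).
Qed.

Lemma Tmul_assoc x y z : Tmul x (Tmul y z) = Tmul (Tmul x y) z.
Proof.
case: (mkc_surj x) => a ->; case: (mkc_surj y) => b ->; case: (mkc_surj z) => c ->.
by rewrite !mul_mkc catA.
Qed.

Lemma Tmul1 x : Tmul Tone x = x.
Proof. by case: (mkc_surj x) => a ->; rewrite /Tone mul_mkc. Qed.

Lemma TmulV x : Tmul (Tinv x) x = Tone.
Proof.
rewrite /Tinv -{2}(mkc_rep x) mul_mkc; apply/mkc_eq; exact: rel_invw.
Qed.

Definition Gr : grp := @Grp Tc Tmul Tone Tinv Tmul_assoc Tmul1 TmulV.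


Local Notation rcl := (@rclass G r (one : vtx G)).

Lemma rcl_rel y a b : rel a b -> rcl y (walkf one a) = rcl y (walkf one b).
Proof.
move=> H; apply: functional_extensionality => W'; apply: propositional_extensionality.
rewrite /rclass; split=> -[H1 H2]; split=> //.
- apply: pi_WH H2; exact: rel_sym.
- exact: pi_WH H2.
Qed.

Lemma fv_key (y : Gam) W : @is_walk G one W y ->
  (fun w => rcl y W (walkf one w)) = cls (wordA W).
Proof.
move=> HW; apply: functional_extensionality => w; apply: propositional_extensionality.
rewrite /rclass /cls; split=> [[_ H] | H].
  by rewrite /rel (walkf_wordA HW).
have E := rel_ev H.
move: H; rewrite /rel (walkf_wordA HW) => H; split=> //.
have := walkf_walk one w; rewrite -E (walk_ev HW); exact.
Qed.

Lemma fv_ok (C : lc_vtx r (one : vtx G)) :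
  exists a, (fun w => sval C (walkf one w)) = cls a.
Proof.
case: C => P [y [W [HW HP]]] /=; exists (wordA W); rewrite HP; exact: fv_key.
Qed.

Definition fv (C : lc_vtx r (one : vtx G)) : Tc := exist _ _ (fv_ok C).

Lemma fv_rclass (C : lc_vtx r (one : vtx G)) (y : Gam) W :
  @is_walk G one W y -> sval C = rcl y W -> fv C = mkc (wordA W).
Proof. by move=> HW HC; apply: sig_eq; rewrite /= HC; exact: fv_key. Qed.

Lemma gv_key a :
  (fun W' => (exists y', @is_walk G one W' y') /\ cls a (wordA W')) =
  rcl (one * ev a) (walkf one a).
Proof.
apply: functional_extensionality => W'; apply: propositional_extensionality.
rewrite /rclass /cls /rel; split.
- case=> [[y' Hy] H]; have E := rel_ev H.
  rewrite /rel (walkf_wordA Hy) in H; split=> //.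
  rewrite E (walk_ev Hy) //.
- case=> Hy H; split; first by exists (one * ev a).
  by rewrite (walkf_wordA Hy).
Qed.

Lemma sval_mkc_rep (x : Tc) : sval x = cls (rep x).
Proof. by rewrite -{1}(mkc_rep x). Qed.

Lemma gv_ok (x : Tc) : exists y W, @is_walk G one W y /\
  (fun W' => (exists y', @is_walk G one W' y') /\ sval x (wordA W')) = rcl y W.
Proof.
exists (one * ev (rep x)), (walkf one (rep x)); split; first exact: walkf_walk.
rewrite sval_mkc_rep; exact: gv_key.
Qed.

Definition gv (x : Tc) : lc_vtx r (one : vtx G) := exist _ _ (gv_ok x).

Lemma fvK : cancel fv gv.
Proof.
move=> C; apply: sig_eq.
case: C => P [y [W [HW HP]]]; subst P => /=.
apply: functional_extensionality => W'; apply: propositional_extensionality.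
split.
- by case=> [[y' Hy] H]; rewrite (walkf_wordA Hy) in H.
- move=> H; have Hy : @is_walk G one W' y by case: H.
  by split; [exists y | rewrite (walkf_wordA Hy)].
Qed.

Lemma gvK : cancel gv fv.
Proof.
move=> x; apply: sig_eq => /=.
apply: functional_extensionality => w; apply: propositional_extensionality.
rewrite wordA_walkf; split=> [[] // | H]; split=> //.
by exists (one * ev w); exact: walkf_walk.
Qed.

Definition Sr (t : Gr) : Prop := exists s : A, t = mkc [:: (s, true)].

Local Notation LC := (local_cover (G := G) r (one : vtx G)).

Definition fe (t : edg LC) : edg (Cay Sr) :=
  (fv (lc_tl t), exist Sr (mkc [:: ((sval t).1.2.2, true)]) (ex_intro _ _ erefl)).

Definition sr_pick (T : {t : Gr | Sr t}) : A :=
  proj1_sig (constructive_indefinite_description _ (proj2_sig T)).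

Lemma sr_pickP T : sval T = mkc [:: (sr_pick T, true)].
Proof. rewrite /sr_pick; by case: (constructive_indefinite_description _ _). Qed.

Lemma fe'_ok (x : Tc) (s : A) :
  let a := rep x in let e := ((one * ev a, s) : edg G) in
  exists W, @is_walk G one W (tl e) /\
    rcl (one * ev a) (walkf one a) = rcl (tl e) W /\
    rcl (hd e) (walkf one (a ++ [:: (s, true)])) = rcl (hd e) (W ++ [:: (e, true)]).
Proof.
move=> a e; exists (walkf one a); split; first exact: walkf_walk.
split=> //; by rewrite walkf_cat.
Qed.

Definition fe' (p : edg (Cay Sr)) : edg LC :=
  let a := rep p.1 in let s := sr_pick p.2 in
  exist _ (rcl (one * ev a) (walkf one a), ((one * ev a, s) : edg G),
           rcl (one * ev a * sval s) (walkf one (a ++ [:: (s, true)]))) (fe'_ok p.1 s).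

Lemma A_eq (s s' : A) : sval s = sval s' -> s = s'.
Proof. exact: sig_eq. Qed.

Lemma mkc1_inj (s s' : A) : mkc [:: (s, true)] = mkc [:: (s', true)] -> s = s'.
Proof.
move/mkc_eq/rel_ev; rewrite /= /lv /= !gmulr1; exact: A_eq.
Qed.

Lemma feK : cancel fe fe'.
Proof.
move=> t; apply: sig_eq.
case: t => [[[P1 e] P2] [W [HW [H1 H2]]]]; simpl in H1, H2; subst P1 P2; rewrite /fe' /fe /=.
set x := fv _.
have Hx : x = mkc (wordA W) by apply: (fv_rclass HW).
set T := exist Sr _ _.
have Hs : sr_pick T = e.2.
  apply: mkc1_inj; by rewrite -sr_pickP.
rewrite Hs.
have Hr : rel (rep x) (wordA W) by apply/mkc_eq; rewrite mkc_rep.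
have Ey : one * ev (rep x) = tl e by rewrite (rel_ev Hr); exact: walk_ev HW.
have He : ((one * ev (rep x), e.2) : edg G) = e by rewrite Ey; clear; case: e.
rewrite He (rcl_rel _ Hr) (walkf_wordA HW).
congr (_, _, _); first by rewrite Ey.
rewrite (rcl_rel _ (rel_catr [:: (e.2, true)] Hr)).
have -> : wordA W ++ [:: (e.2, true)] = wordA (W ++ [:: (e, true)]) by rewrite wordA_cat.
rewrite Ey (@walkf_wordA one _ (hd e)) //.
exact: (is_walk_rcons HW).
Qed.

Lemma fe'K : cancel fe' fe.
Proof.
case=> x T; rewrite /fe /fe' /=; congr (_, _).
- rewrite (@fv_rclass _ (one * ev (rep x)) (walkf one (rep x))) //.
    by rewrite wordA_walkf mkc_rep.
  exact: walkf_walk.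
- by apply: sig_eq; rewrite /= -sr_pickP.
Qed.

Lemma fe_ends (t : edg LC) :
  tl (fe t) = fv (tl t) /\ hd (fe t) = fv (hd t).
Proof.
split=> //.
case: t => [[[P1 e] P2] [W [HW [H1 H2]]]]; simpl in H1, H2; subst P1 P2.
rewrite /fe /= (fv_rclass (C := lc_tl _) HW) //.
rewrite (@fv_rclass _ (hd e) (W ++ [:: (e, true)])) //; last exact: (is_walk_rcons HW).
by rewrite /= mul_mkc wordA_cat.
Qed.

Lemma iso_lc : mg_iso LC (Cay Sr).
Proof.
exists fv, fe; split; first by exists gv; [exact: fvK | exact: gvK].
split; first by exists fe'; [exact: feK | exact: fe'K].
exact: fe_ends.
Qed.

Definition Ts (s : A) : {t : Gr | Sr t} := exist Sr (mkc [:: (s, true)]) (ex_intro _ s erefl).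

Fixpoint cwalk (x : Gr) (a : seq (A * bool)) : seq (dart (Cay Sr)) :=
  if a is p :: a' then
    (if p.2 then ((x, Ts p.1), true) else ((gmul x (mkc [:: (p.1, false)]), Ts p.1), false))
      :: cwalk (gmul x (mkc [:: p])) a'
  else [::].

Lemma cwalk_walk (x : Gr) a : @is_walk (Cay Sr) x (cwalk x a) (gmul x (mkc a)).
Proof.
elim: a x => [|[s b] a IH] x /=; first by symmetry; exact: (gmulr1 x).
have E : mkc ((s, b) :: a) = Tmul (mkc [:: (s, b)]) (mkc a) by rewrite mul_mkc.
case: b E => E; rewrite /dsrc /dtgt /=; split.
- by [].
- by rewrite E Tmul_assoc; apply: IH.
- rewrite -Tmul_assoc mul_mkc.
  have -> : mkc [:: (s, false); (s, true)] = Tone.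
    by apply/mkc_eq; exact: (rel_free [::] [::] s false).
  exact: (gmulr1 (x : Gr)).
- by rewrite E Tmul_assoc; apply: IH.
Qed.

Lemma conn_Sr : connected (Cay Sr).
Proof.
move=> x y; exists (cwalk x (rep (gmul (ginv x) y))).
have := cwalk_walk x (rep (gmul (ginv x) y)).
by rewrite mkc_rep gmulKr.
Qed.

Lemma In_map' (T U : Type) (f : T -> U) x (l : seq T) : List.In x l -> List.In (f x) (map f l).
Proof. elim: l => //= z l IH [->|H]; [by left | by right; auto]. Qed.

Lemma Ts_pick (T : {t : Gr | Sr t}) : T = Ts (sr_pick T).
Proof. apply: sig_eq; exact: sr_pickP. Qed.

Lemma lf_Sr (l : seq (edg G)) : (forall s : A, List.In ((one, s) : edg G) l) ->
  locally_finite (Cay Sr).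
Proof.
move=> Hl x.
pose Tl := map (fun e : edg G => Ts e.2) l.
have HT : forall T, List.In T Tl.
  move=> T; rewrite (Ts_pick T); exact: (In_map' (fun e : edg G => Ts e.2) (Hl (sr_pick T))).
exists (map (fun T => ((x, T) : edg (Cay Sr))) Tl ++
        map (fun T => ((gmul x (ginv (sval T)), T) : edg (Cay Sr))) Tl).
case=> g T /= [Ht | Hh]; apply: List.in_or_app.
- by left; rewrite /= in Ht; subst g; exact: In_map'.
- right; rewrite /= in Hh.
  have -> : g = gmul x (ginv (sval T)) by rewrite -Hh -gmulA gmulVr gmulr1.
  exact: (In_map' (fun T => ((gmul x (ginv (sval T)), T) : edg (Cay Sr)))).
Qed.

Lemma quot_Gr : connected G -> is_quotient_of Gam Gr.
Proof.
move=> Hc; exists (fun x : Gr => ev (rep x)); split.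
- move=> x y; rewrite /= (rel_ev (rel_rep _)) ev_cat //.
- move=> y; case: (Hc one y) => W HW.
  exists (mkc (wordA W)); rewrite (rel_ev (rel_rep _)).
  by rewrite -(walk_ev HW) gmul1.
Qed.

Section Pres.
Variable l : seq (edg G).
Hypothesis Hl : forall s : A, List.In ((one, s) : edg G) l.

Local Notation X := 'I_(size l).

Definition sg (i : X) : A := (tnth (in_tuple l) i).2.

Lemma In_nth_ord (x : edg G) : List.In x l -> exists i : X, tnth (in_tuple l) i = x.
Proof.
move=> H.
have [n [Hn Hx]] : exists n, n < size l /\ nth x l n = x.
  elim: l H => //= z l' IH [->|H]; first by exists 0.
  case: (IH H) => n [Hn Hx]; by exists n.+1.
exists (Ordinal Hn); by rewrite (tnth_nth x).
Qed.

Lemma sg_surj (s : A) : exists i, sg i = s.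
Proof. case: (In_nth_ord (Hl s)) => i Hi; exists i; by rewrite /sg Hi. Qed.

Definition io (s : A) : X := proj1_sig (constructive_indefinite_description _ (sg_surj s)).

Lemma sg_io s : sg (io s) = s.
Proof. rewrite /io; by case: (constructive_indefinite_description _ _). Qed.

Definition gam (i : X) : Gr := mkc [:: (sg i, true)].

Definition sw (w : seq (X * bool)) : seq (A * bool) := map (fun p => (sg p.1, p.2)) w.

Lemma ginv_gam i : ginv (gam i) = mkc [:: (sg i, false)].
Proof.
symmetry; apply: ginv_uniq; rewrite /gam /= mul_mkc.
by apply/mkc_eq; exact: (rel_free [::] [::] (sg i) false).
Qed.

Lemma weval_eq w : weval gam w = mkc (sw w).
Proof.
elim: w => [|[x b] w IH] //.
change (gmul (if b then gam x else ginv (gam x)) (weval gam w) = mkc (sw ((x, b) :: w))).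
rewrite IH; case: b; last rewrite ginv_gam; by rewrite /gam /= mul_mkc.
Qed.

Fixpoint allwords (n : nat) : seq (seq (X * bool)) :=
  if n is n'.+1 then
    [::] :: List.flat_map (fun p => List.map (cons p) (allwords n')) (enum {: X * bool})
  else [:: [::]].

Lemma mem_In (T : eqType) (x : T) (s : seq T) : x \in s -> List.In x s.
Proof. elim: s => //= y s IH; rewrite in_cons => /orP [/eqP ->|H]; [by left | by right; auto]. Qed.

Lemma allwordsP n w : size w <= n -> List.In w (allwords n).
Proof.
elim: n w => [|n IH] [|p w] //=; first by left.
  by left.
move=> Hs; right; apply/List.in_flat_map; exists p; split.
  by apply: mem_In; rewrite mem_enum.
apply: List.in_map; exact: IH.
Qed.

Definition isrel (w : seq (X * bool)) : bool :=
  if excluded_middle_informative (rel (sw w) [::]) then true else false.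

Definition R := List.filter isrel (allwords (maxn r 2)).

Lemma R_rel w : List.In w R -> rel (sw w) [::].
Proof.
case/List.filter_In => _; rewrite /isrel.
by case: excluded_middle_informative.
Qed.

Lemma R_in w : size w <= maxn r 2 -> rel (sw w) [::] -> List.In w R.
Proof.
move=> Hs Hr; apply/List.filter_In; split; first exact: allwordsP.
by rewrite /isrel; case: excluded_middle_informative.
Qed.

Lemma sw_cat a b : sw (a ++ b) = sw a ++ sw b.
Proof. by rewrite /sw map_cat. Qed.

Lemma pres_rel a b : pres_eq R a b -> rel (sw a) (sw b).
Proof.
elim=> [x y [u v x' bb| u v rr Hin] | x | x y _ IH | x y z _ IH1 _ IH2].
- rewrite !sw_cat /=; exact: rel_free.
- rewrite !sw_cat; apply: rel_catl; rewrite -[sw v]cat0s; apply: rel_catr.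
  exact: R_rel.
- exact: rel_refl.
- exact: rel_sym.
- exact: rel_trans IH2.
Qed.

Lemma pres_ctx u v a0 b0 : pres_eq R a0 b0 -> pres_eq R (u ++ a0 ++ v) (u ++ b0 ++ v).
Proof.
elim=> [x y [u' v' x' b'| u' v' rr Hin] | x | x y _ IH | x y z _ IH1 _ IH2].
- apply: rst_step.
  have -> : u ++ (u' ++ [:: (x', b'), (x', ~~ b') & v']) ++ v =
            (u ++ u') ++ (x', b') :: (x', ~~ b') :: (v' ++ v) by rewrite -!catA.
  have -> : u ++ (u' ++ v') ++ v = (u ++ u') ++ (v' ++ v) by rewrite -!catA.
  exact: PS_free.
- apply: rst_step.
  have -> : u ++ (u' ++ rr ++ v') ++ v = (u ++ u') ++ rr ++ (v' ++ v) by rewrite -!catA.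
  have -> : u ++ (u' ++ v') ++ v = (u ++ u') ++ (v' ++ v) by rewrite -!catA.
  exact: PS_rel.
- exact: rst_refl.
- exact: rst_sym.
- exact: rst_trans IH2.
Qed.

Lemma pres_cat a a' b b' : pres_eq R a a' -> pres_eq R b b' -> pres_eq R (a ++ b) (a' ++ b').
Proof.
move=> H1 H2; apply: (@rst_trans _ _ _ (a' ++ b)).
  by have := pres_ctx [::] b H1.
by have := pres_ctx a' [::] H2; rewrite !cats0.
Qed.

Lemma pres_invw U : pres_eq R (U ++ invw U) [::].
Proof.
elim: U => [|[x b] U IH]; first exact: rst_refl.
rewrite /invw /= rev_cons' -/(invw U) /=.
apply: (@rst_trans _ _ _ [:: (x, b); (x, ~~ b)]).
  have := pres_ctx [:: (x, b)] [:: (x, ~~ b)] IH; by rewrite /= -catA.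
apply: rst_step; exact: (PS_free R [::] [::] x b).
Qed.

Lemma invwK (T : Type) (w : seq (T * bool)) : invw (invw w) = w.
Proof.
rewrite /invw map_rev revK -map_comp.
by elim: w => //= [[x b] w] ->; rewrite negbK.
Qed.

Definition wordX (c : seq D) : seq (X * bool) := map (fun d : D => (io d.1.2, d.2)) c.

Lemma wordX_cat a b : wordX (a ++ b) = wordX a ++ wordX b.
Proof. by rewrite /wordX map_cat. Qed.

Lemma wordX_rev a : wordX (rev_walk a) = invw (wordX a).
Proof. by rewrite /wordX /invw /rev_walk !map_rev -!map_comp. Qed.

Lemma sw_wordX c : sw (wordX c) = wordA c.
Proof. by rewrite /sw /wordX /wordA -map_comp; apply: eq_map => d /=; rewrite sg_io. Qed.

Lemma pi_pres (x0 : Gam) c : pi1r_mem r (x0 : vtx G) c -> pres_eq R (wordX c) [::].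
Proof.
elim=> {c} [W0 y Q HW0 HQ | | a b _ IHa _ IHb | a _ IH | a b _ IH Hab].
- rewrite !wordX_cat wordX_rev.
  have Hin : List.In (wordX Q) R.
    apply: R_in.
      case: HQ => _ [/andP [_ Hs] _]; rewrite size_map.
      by apply: leq_trans Hs _; apply: leq_maxl.
    rewrite sw_wordX /rel /= cats0.
    have E : walkf one (wordA Q) = map (tr (ginv y)) Q.
      by rewrite -(gmulV y) walkf_tr (walkf_wordA (proj1 HQ)).
    rewrite E -(gmulV y); apply: tr_pi.
    have := @P_lasso G r (y : vtx G) [::] y Q erefl HQ; by rewrite /= cats0.
  apply: (@rst_trans _ _ _ (wordX W0 ++ [::] ++ invw (wordX W0))).
    apply: rst_step; exact: PS_rel.
  exact: pres_invw.
- exact: rst_refl.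
- rewrite wordX_cat; exact: (pres_cat IHa IHb).
- rewrite wordX_rev.
  apply: (@rst_trans _ _ _ (invw (wordX a) ++ wordX a)).
    by have := pres_cat (rst_refl _ _ (invw (wordX a))) (rst_sym _ _ _ _ IH); rewrite cats0.
  by have := pres_invw (invw (wordX a)); rewrite invwK.
- apply: rst_trans IH.
  apply: rst_sym; elim: Hab => [x y [u v d]| x | x y _ IH' | x y z _ IH1 _ IH2].
  + apply: rst_step; rewrite !wordX_cat /=; case: d => e bb; exact: PS_free.
  + exact: rst_refl.
  + exact: rst_sym.
  + exact: rst_trans IH2.
Qed.

Lemma pres_swap w : pres_eq R w (map (fun p => (io (sg p.1), p.2)) w).
Proof.
elim: w => [|[x b] w IH]; first exact: rst_refl.
rewrite /=; set x' := io (sg x).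
apply: (@rst_trans _ _ _ ((x, b) :: (x', ~~ b) :: (x', b) :: w)).
  apply: rst_sym; apply: rst_step.
  have := PS_free R [:: (x, b)] w x' (~~ b); by rewrite negbK.
apply: (@rst_trans _ _ _ ((x', b) :: w)).
  apply: rst_step; have := PS_rel [::] ((x', b) :: w) (rr := [:: (x, b); (x', ~~ b)]).
  apply; apply: R_in; first by rewrite leq_maxr.
  rewrite /sw /= /x' sg_io; exact: (rel_free [::] [::] (sg x) b).
by have := pres_ctx [:: (x', b)] [::] IH; rewrite !cats0.
Qed.

Lemma fp_Gr : finitely_presented Gr.
Proof.
exists X, gam, R; split.
- move=> h; case: (mkc_surj h) => a ->.
  exists (map (fun p => (io p.1, p.2)) a); rewrite weval_eq /sw -map_comp.
  congr mkc; rewrite -[RHS]map_id; apply: eq_map => -[s b] /=; by rewrite sg_io.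
- move=> w; rewrite weval_eq; split.
  + move/mkc_eq; rewrite /rel /= cats0 => /pi_pres.
    have -> : wordX (walkf one (sw w)) = map (fun p => (io p.1, p.2)) (wordA (walkf one (sw w))).
      by rewrite /wordX /wordA -map_comp.
    rewrite wordA_walkf /sw -map_comp => H.
    apply: rst_trans H; exact: pres_swap.
  + by move/pres_rel => H; apply/mkc_eq.
Qed.

End Pres.

End Cayley.

Theorem theorem4p10 (Gam : grp) (S : Gam -> Prop) (r : nat) :
  connected (Cay S) -> locally_finite (Cay S) ->
  exists (Gr : grp) (Sr : Gr -> Prop),
    connected (Cay Sr) /\ locally_finite (Cay Sr) /\
    finitely_presented Gr /\ is_quotient_of Gam Gr /\
    mg_iso (local_cover (G := Cay S) r (gone Gam)) (Cay Sr).
Proof.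
move=> Hc Hlf.
case: (Hlf (gone Gam)) => l Hl'.
have Hl : forall s : {s : Gam | S s}, List.In ((gone Gam, s) : edg (Cay S)) l.
  by move=> s; apply: Hl'; left.
exists (@Gr Gam S r), (@Sr Gam S r).
split; first exact: conn_Sr.
split; first exact: (lf_Sr Hl).
split; first exact: (@fp_Gr Gam S r l Hl).
split; first exact: quot_Gr.
exact: iso_lc.
Qed.
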